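(* Let $Z_1,\ldots,Z_{n+1}$ be i.i.d. from an arbitrary distribution $\mathcal P$ on $\mathbb R^p\times\mathbb R$, let $V$ be a fixed score function, and let $\alpha\in(0,1)$. Let $\tilde\alpha\in[0,1]$ be a random level that depends on the data only through the unordered multiset $\{Z_1,\ldots,Z_{n+1}\}$ (possibly also on auxiliary randomness independent of the data), and suppose that almost surely $$\text{(G1)}\qquad \frac{1}{n+1}\sum_{i=1}^{n+1}\mathbb 1\{V_i\le v^*_i\}\ \ge\ \alpha,\qquad v^*_i:=Q(\tilde\alpha;\hat{\mathcal F}_i),\ i=1,\ldots,n+1.$$ Then $\mathbb P\{V_{n+1}\le Q(\tilde\alpha;\hat{\mathcal F}_{n+1})\}\ge\alpha$, and consequently $\mathbb P\{V_{n+1}\le Q(\tilde\alpha;\hat{\mathcal F})\}\ge\alpha$.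
   Context: Data: $Z_i=(X_i,Y_i)\in\mathbb R^p\times\mathbb R$, $i=1,\ldots,n+1$; $X=\{X_1,\ldots,X_{n+1}\}$ (unordered). A localizer is a function $H(x_1,x_2,X)\in[0,1]$ of $x_1,x_2\in\mathbb R^p$ and of the unordered set $X$, satisfying $H(x,x,X)=1$ for all $x$. Write $H_{i,j}=H(X_i,X_j,X)$ and $p^H_{i,j}=H_{i,j}/\sum_{k=1}^{n+1}H_{i,k}$. For a probability distribution $\mathcal F$ on $\mathbb R\cup\{\infty\}$ and $a\in[0,1]$, $Q(a;\mathcal F)=\inf\{t:\mathbb P_{T\sim\mathcal F}(T\le t)\ge a\}$; $\delta_v$ denotes the point mass at $v$. A fixed score function is a deterministic measurable $V:\mathbb R^p\times\mathbb R\to[0,\infty)$ not depending on the data; $V_i=V(Z_i)$. Define $\hat{\mathcal F}_i=\sum_{j=1}^{n+1}p^H_{i,j}\delta_{V_j}$ for $i=1,\ldots,n+1$, and $\hat{\mathcal F}=\sum_{j=1}^{n}p^H_{n+1,j}\delta_{V_j}+p^H_{n+1,n+1}\delta_{\infty}$. *)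

(* Defs.v *)
From HB Require Import structures.
From mathcomp Require Import all_boot all_order all_algebra.
From mathcomp Require Import all_classical all_reals all_analysis.
From mathcomp Require Import fingroup perm.
Set Implicit Arguments. Unset Strict Implicit. Unset Printing Implicit Defensive.
Import Order.TTheory GRing.Theory Num.Theory.
Local Open Scope classical_set_scope.
Local Open Scope ring_scope.

(* Points of R^p are represented as p-tuples of reals (which carry the
   product sigma-algebra in MathComp-Analysis); a data point Z = (X,Y) lives in
   (p.-tuple R * R). *)

(* Left-continuous-inverse quantile of the finite discrete distribution
   sum_j w j * delta_{v j} on R \cup {+oo} (values in \bar R, +oo used for the
   point mass at infinity):
     Q(a; F) = inf { t in R \cup {oo} : P_{T ~ F}(T <= t) >= a },
   where P_{T~F}(T <= t) = sum_{j : v j <= t} w j. *)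
Definition quantile (R : realType) (m : nat) (w : 'I_m -> R)
    (v : 'I_m -> \bar R) (a : R) : \bar R :=
  ereal_inf [set t : \bar R | t != -oo%E /\ a <= \sum_(j < m | (v j <= t)%E) w j].

Definition pH (R : realType) (p n : nat)
    (H : p.-tuple R -> p.-tuple R -> n.-tuple (p.-tuple R) -> R)
    (x : n.-tuple (p.-tuple R)) (i j : 'I_n) : R :=
  H (tnth x i) (tnth x j) x / \sum_(k < n) H (tnth x i) (tnth x k) x.

Definition tperm_tuple (T : Type) (n : nat) (s : 'S_n) (t : n.-tuple T)
  : n.-tuple T := [tuple tnth t (s i) | i < n].

Definition localizer (R : realType) (p n : nat)
    (H : p.-tuple R -> p.-tuple R -> n.-tuple (p.-tuple R) -> R) : Prop :=
  [/\ forall x1 x2 X, 0 <= H x1 x2 X <= 1,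
      forall x X, H x x X = 1 &
      forall x1 x2 X (s : 'S_n), H x1 x2 (tperm_tuple s X) = H x1 x2 X].

(* Z_1,...,Z_n are i.i.d. with common law mu, and jointly independent of the
   auxiliary random element W (product rule on all measurable rectangles). *)
Definition iid_indep_aux (R : realType) (d : measure_display)
    (Omega : measurableType d) (P : probability Omega R)
    (dT : measure_display) (T : measurableType dT) (mu : probability T R)
    (dU : measure_display) (U : measurableType dU)
    (n : nat) (Z : 'I_n -> Omega -> T) (W : Omega -> U) : Prop :=
  forall (A : 'I_n -> set T) (B : set U),
    (forall i, measurable (A i)) -> measurable B ->
    P ((\bigcap_(i in [set: 'I_n]) (Z i @^-1` A i)) `&` (W @^-1` B)) =
    ((\prod_(i < n) mu (A i)) * P (W @^-1` B))%E.

(* Main.v *)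
Require Import Defs.
From HB Require Import structures.
From mathcomp Require Import all_boot all_order all_algebra.
From mathcomp Require Import all_classical all_reals all_analysis.
From mathcomp Require Import fingroup perm.
From mathcomp Require Import measurable_realfun.
Import Order.TTheory GRing.Theory Num.Theory.
Local Open Scope classical_set_scope.
Local Open Scope ring_scope.

Section rect.
Context dT (T : measurableType dT) dU (U : measurableType dU) (N : nat).

Definition rects : set (set (N.-tuple T * U)%type) :=
  [set E | exists (A : 'I_N -> set T) (B : set U),
     [/\ (forall i, measurable (A i)), measurable B &
         E = [set q | (forall i, A i (tnth q.1 i)) /\ B q.2]]].

Lemma rects_measurable : rects `<=` measurable.
Proof.
move=> _ [A [B [mA mB ->]]].
have -> : [set q : (N.-tuple T * U)%type | (forall i, A i (tnth q.1 i)) /\ B q.2] =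
  (\bigcap_(i in [set: 'I_N]) (fst @^-1` ((fun t => tnth t i) @^-1` A i))) `&` (snd @^-1` B).
  apply/seteqP; split => q /=.
    by move=> [h1 h2]; split => // i _; exact: h1.
  by move=> [h1 h2]; split => // i; exact: h1.
apply: measurableI; last first.
  by rewrite -[X in measurable X]setTI; apply: measurable_snd.
apply: fin_bigcap_measurable => // i _.
rewrite -[X in measurable X]setTI; apply: measurable_fst => //.
by rewrite -[X in measurable X]setTI; apply: measurable_tnth.
Qed.

Lemma measurable_rects : measurable `<=` <<s rects >>.
Proof.
pose TG := g_sigma_algebraType rects.
have mid : measurable_fun (setT : set TG) (id : TG -> (N.-tuple T * U)%type).
  apply/measurable_fun_pairP; split.
    apply/measurable_fun_tnthP => i _ A mA.
    apply: sub_sigma_algebra.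
    exists (fun j => if j == i then A else setT), setT; split => //.
      by move=> j; case: ifP.
    apply/seteqP; split => q /=.
      move=> [_ h]; split => // j; case: eqP => [->//|//].
    by move=> [h _]; split => //; have := h i; rewrite eqxx.
  move=> _ B mB; apply: sub_sigma_algebra.
  exists (fun _ => setT), B; split => //.
  by apply/seteqP; split => q /=; [move=> [_ h]|move=> [_ h]].
move=> E mE; have := mid measurableT E mE.
by rewrite setTI.
Qed.

Lemma rects_setI : setI_closed rects.
Proof.
move=> _ _ [A [B [mA mB ->]]] [A' [B' [mA' mB' ->]]].
exists (fun i => A i `&` A' i), (B `&` B'); split => //.
- by move=> i; apply: measurableI.
- exact: measurableI.
apply/seteqP; split => q /=.
  by move=> [[h1 h2] [h3 h4]]; split => // i; split.
by move=> [h [h1 h2]]; split; split => // i; have [] := h i.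
Qed.

Lemma rectsT : rects setT.
Proof.
exists (fun _ => setT), setT; split => //.
by apply/seteqP; split.
Qed.

End rect.

Section exch.
Context (R : realType) d (Omega : measurableType d) (P : probability Omega R)
  dT (T : measurableType dT) (mu : probability T R) dU (U : measurableType dU)
  (N : nat) (Z : 'I_N -> Omega -> T) (W : Omega -> U).
Hypothesis mZ : forall i, measurable_fun setT (Z i).
Hypothesis mW : measurable_fun setT W.
Hypothesis hiid : iid_indep_aux P mu Z W.

Definition Fs (s : 'S_N) (w : Omega) : (N.-tuple T * U)%type :=
  ([tuple Z (s i) w | i < N], W w).

Lemma measurable_Fs s : measurable_fun setT (Fs s).
Proof.
apply: measurable_fun_pair => //; apply/measurable_fun_tnthP => i.
rewrite (_ : _ \o _ = Z (s i)); first exact: mZ.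
by apply: funext => w /=; rewrite tnth_mktuple.
Qed.

Lemma Fs_rect s (A : 'I_N -> set T) (B : set U) :
  (forall i, measurable (A i)) -> measurable B ->
  P (Fs s @^-1` [set q | (forall i, A i (tnth q.1 i)) /\ B q.2]) =
  ((\prod_(i < N) mu (A i)) * P (W @^-1` B))%E.
Proof.
move=> mA mB.
have -> : Fs s @^-1` [set q | (forall i, A i (tnth q.1 i)) /\ B q.2] =
   (\bigcap_(i in [set: 'I_N]) (Z i @^-1` A (s^-1 i)%g)) `&` (W @^-1` B).
  apply/seteqP; split => w /=.
    move=> [h1 h2]; split => // i _ /=.
    have := h1 (s^-1 i)%g; by rewrite tnth_mktuple permKV.
  move=> [h1 h2]; split => // i; rewrite tnth_mktuple.
  by have := h1 (s i) I; rewrite /= permK.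
rewrite hiid //; congr (_ * _)%E.
by rewrite [RHS](reindex_inj (@perm_inj _ s^-1)%g).
Qed.

Lemma exch s E : measurable E -> P (Fs 1 @^-1` E) = P (Fs s @^-1` E).
Proof.
move=> mE.
have mG : measurable = <<s @rects _ T _ U N >>.
  apply/seteqP; split; first exact: measurable_rects.
  apply: smallest_sub; first exact: sigma_algebra_measurable.
  exact: rects_measurable.
have := @measure_unique _ R _ (@rects _ T _ U N) (fun _ => setT) mG (@rects_setI _ _ _ _ _)
  (fun _ => @rectsT _ _ _ _ _) (@bigcup_const _ _ setT setT (ex_intro _ 0%N I))
  (pushforward P (Fs 1)) (pushforward P (Fs s)).
apply; try exact: measurable_Fs.
- move=> h1 h2 _ [A [B [mA mB ->]]].
  rewrite [LHS](_ : _ = P (Fs 1 @^-1` [set q | (forall i, A i (tnth q.1 i)) /\ B q.2])) //.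
  rewrite [RHS](_ : _ = P (Fs s @^-1` [set q | (forall i, A i (tnth q.1 i)) /\ B q.2])) //.
  by rewrite !Fs_rect.
- move=> h1 _; rewrite [X in (X < _)%E](_ : _ = P (Fs 1 @^-1` setT)) //.
  by rewrite preimage_setT probability_setT ltry.
- exact: mE.
Qed.

End exch.
Lemma quantileP (R : realType) m (w : 'I_m -> R) (v : 'I_m -> \bar R) (x a : R) :
  (forall j, 0 <= w j) ->
  (x%:E <= quantile w v a)%E = (\sum_(j < m | (v j < x%:E)%E) w j < a).
Proof.
move=> w0; rewrite /quantile; apply/idP/idP.
- move=> hx; rewrite ltNge; apply/negP => ha.
  pose t := \big[Order.max/(x-1)%:E]_(j < m | (v j < x%:E)%E) v j.
  have tx : (t < x%:E)%E.
    apply: bigmax_lt => [|j //]; by rewrite lte_fin ltrBlDr ltrDl.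
  have tS : [set s : \bar R | s != -oo%E /\ a <= \sum_(j < m | (v j <= s)%E) w j] t.
    split.
      have h := bigmax_ge_id (index_enum 'I_m) (x-1)%:E (fun j => (v j < x%:E)%E) v.
      by rewrite gt_eqF // (lt_le_trans _ h) // ltNyr.
    apply: (le_trans ha); rewrite [leRHS]big_mkcond [leLHS]big_mkcond /=.
    apply: ler_sum => j _; case: ifP => vj; last by case: ifP.
    by rewrite (_ : (v j <= t)%E) // /t; apply: le_bigmax_cond.
  have := le_trans hx (ereal_inf_lbound tS).
  by rewrite leNgt tx.
- move=> hs; apply: le_ereal_inf_tmp => t [tninf hat]; rewrite leNgt; apply/negP => tx.
  have : \sum_(j < m | (v j <= t)%E) w j <= \sum_(j < m | (v j < x%:E)%E) w j.
    rewrite [leRHS]big_mkcond [leLHS]big_mkcond /=.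
    apply: ler_sum => j _; case: ifP => vj; last by case: ifP.
    by rewrite (le_lt_trans vj tx).
  move=> h; have := le_lt_trans (le_trans hat h) hs; by rewrite ltxx.
Qed.

Theorem corollary1 (R : realType) (p n : nat)
  (d : measure_display) (Omega : measurableType d) (P : probability Omega R)
  (dU : measure_display) (U : measurableType dU)
  (Z : 'I_n.+1 -> Omega -> (p.-tuple R * R)%type) (W : Omega -> U)
  (V : (p.-tuple R * R)%type -> R)
  (H : p.-tuple R -> p.-tuple R -> n.+1.-tuple (p.-tuple R) -> R)
  (g : n.+1.-tuple (p.-tuple R * R)%type -> U -> R)
  (alpha : R) :
  (forall i, measurable_fun setT (Z i)) ->
  measurable_fun setT W ->
  (exists mu : probability (p.-tuple R * R)%type R, iid_indep_aux P mu Z W) ->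
  measurable_fun setT V ->
  (forall z, 0 <= V z) ->
  localizer H ->
  measurable_fun setT
    (fun q : (p.-tuple R * p.-tuple R) * n.+1.-tuple (p.-tuple R) =>
       H q.1.1 q.1.2 q.2) ->
  (forall t u (s : 'S_n.+1), g (tperm_tuple s t) u = g t u) ->
  (forall t u, 0 <= g t u <= 1) ->
  measurable_fun setT (fun q : n.+1.-tuple (p.-tuple R * R)%type * U => g q.1 q.2) ->
  0 < alpha < 1 ->
  let Zt w := [tuple Z i w | i < n.+1] in
  let Xt w := [tuple (Z i w).1 | i < n.+1] in
  let atil w := g (Zt w) (W w) in
  let vstar (i : 'I_n.+1) w :=
    quantile (pH H (Xt w) i) (fun j => (V (Z j w))%:E) (atil w) in
  let vhat w :=
    quantile (pH H (Xt w) ord_max)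
      (fun j => if j == ord_max then +oo%E else (V (Z j w))%:E) (atil w) in
  {ae P, forall w,
     alpha <= (n.+1)%:R^-1 * \sum_(i < n.+1) ((V (Z i w))%:E <= vstar i w)%E%:R} ->
  (alpha%:E <= P [set w | ((V (Z ord_max w))%:E <= vstar ord_max w)%E])%E /\
  (alpha%:E <= P [set w | ((V (Z ord_max w))%:E <= vhat w)%E])%E.
Proof.
move=> mZ mW [mu hiid] mV V0 [H01 H11 Hperm] mH gperm g01 mg /andP[a0 a1] Zt Xt atil vstar vhat hae.
pose T' := (n.+1.-tuple (p.-tuple R * R) * U)%type.
pose Hq (t : n.+1.-tuple (p.-tuple R * R)) i j :=
  H (tnth t i).1 (tnth t j).1 [tuple (tnth t k).1 | k < n.+1].
pose ev i (q : T') : bool := \sum_(j < n.+1)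
   (if V (tnth q.1 j) < V (tnth q.1 i) then Hq q.1 i j else 0) <
   g q.1 q.2 * \sum_(k < n.+1) Hq q.1 i k.
pose evh (q : T') : bool := \sum_(j < n.+1)
   (if (j != ord_max) && (V (tnth q.1 j) < V (tnth q.1 ord_max))
    then Hq q.1 ord_max j else 0) <
   g q.1 q.2 * \sum_(k < n.+1) Hq q.1 ord_max k.
have Hq0 t i j : 0 <= Hq t i j by have /andP[] := H01 (tnth t i).1 (tnth t j).1 [tuple (tnth t k).1 | k < n.+1].
have S0 t i : 0 < \sum_(k < n.+1) Hq t i k.
  rewrite (bigD1 i) //= /Hq H11; apply: (lt_le_trans ltr01).
  by rewrite lerDl; apply: sumr_ge0 => k _; exact: Hq0.
have XtE w : [tuple (tnth (Zt w) k).1 | k < n.+1] = Xt w.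
  by apply: eq_from_tnth => k; rewrite !tnth_mktuple.
have HqE w i j : Hq (Zt w) i j = H (tnth (Xt w) i) (tnth (Xt w) j) (Xt w).
  by rewrite /Hq XtE !tnth_mktuple.
have pHE w i j : pH H (Xt w) i j = Hq (Zt w) i j / \sum_(k < n.+1) Hq (Zt w) i k.
  by rewrite /pH HqE; congr (_ / _); apply: eq_bigr => k _; rewrite HqE.
have pH0 w i j : 0 <= pH H (Xt w) i j.
  by rewrite pHE divr_ge0 // ltW.
have ifdiv (c : bool) (x y : R) : (if c then x / y else 0) = (if c then x else 0) / y.
  by case: c; rewrite ?mul0r.
have tZ w j : tnth (Zt w) j = Z j w by rewrite tnth_mktuple.
have link i w : ((V (Z i w))%:E <= vstar i w)%E = ev i (Zt w, W w).
  rewrite /vstar quantileP // big_mkcond /=.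
  under eq_bigr do rewrite pHE lte_fin ifdiv.
  rewrite -mulr_suml ltr_pdivrMr // /ev /=.
  by congr (_ < _); apply: eq_bigr => j _; rewrite !tnth_mktuple.
have linkh w : ((V (Z ord_max w))%:E <= vhat w)%E = evh (Zt w, W w).
  rewrite /vhat quantileP // big_mkcond /=.
  have condE j : ((if j == ord_max then +oo%E else (V (Z j w))%:E) < (V (Z ord_max w))%:E)%E = (j != ord_max) && (V (Z j w) < V (Z ord_max w)).
    by case: eqP; rewrite ?lte_fin.
  under eq_bigr => j _ do rewrite pHE condE ifdiv.
  rewrite -mulr_suml ltr_pdivrMr // /evh /=.
  by congr (_ < _); apply: eq_bigr => j _; rewrite !tnth_mktuple.
have mtn j : measurable_fun setT (fun q : T' => tnth q.1 j).
  exact: measurableT_comp (measurable_tnth j) measurable_fst.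
have mVq j : measurable_fun setT (fun q : T' => V (tnth q.1 j)).
  exact: measurableT_comp mV (mtn j).
have mX : measurable_fun setT (fun q : T' => [tuple (tnth q.1 k).1 | k < n.+1]).
  apply/measurable_fun_tnthP => k.
  rewrite (_ : _ \o _ = fun q : T' => (tnth q.1 k).1).
    exact: measurableT_comp measurable_fst (mtn k).
  by apply: funext => q /=; rewrite tnth_mktuple.
have mHq i j : measurable_fun setT (fun q : T' => Hq q.1 i j).
  exact: (measurableT_comp mH (measurable_fun_pair (measurable_fun_pair
    (measurableT_comp measurable_fst (mtn i)) (measurableT_comp measurable_fst (mtn j))) mX)).
have mSq i : measurable_fun setT (fun q : T' => \sum_(k < n.+1) Hq q.1 i k).
  by apply: measurable_sum => k; exact: mHq.
have mbool (f : T' -> bool) : measurable_fun setT f -> measurable [set q | f q].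
  move=> mf; have := mf measurableT [set true] I; rewrite setTI.
  by rewrite (_ : f @^-1` [set true] = [set q | f q]) //; apply/seteqP; split => q /=.
have mev i : measurable [set q : T' | ev i q].
  apply: mbool; apply: measurable_fun_ltr.
    apply: measurable_sum => j; apply: measurable_fun_ifT.
    - exact: measurable_fun_ltr.
    - exact: mHq.
    - exact: measurable_cst.
  by apply: measurable_funM => //; exact: mSq.
have mevh : measurable [set q : T' | evh q].
  apply: mbool; apply: measurable_fun_ltr.
    apply: measurable_sum => j; apply: measurable_fun_ifT.
    - apply: measurable_and; first exact: measurable_cst.
      exact: measurable_fun_ltr.
    - exact: mHq.
    - exact: measurable_cst.
  by apply: measurable_funM => //; exact: mSq.
have evperm i (s : 'S_n.+1) (t : n.+1.-tuple (p.-tuple R * R)) (u : U) :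
    ev i ((tperm_tuple s t, u) : T') = ev (s i) ((t, u) : T').
  have tt k : tnth (tperm_tuple s t) k = tnth t (s k) by rewrite tnth_mktuple.
  have Xp : [tuple (tnth (tperm_tuple s t) k).1 | k < n.+1] =
            tperm_tuple s [tuple (tnth t k).1 | k < n.+1].
    by apply: eq_from_tnth => k; rewrite !tnth_mktuple.
  have Hqp a b : Hq (tperm_tuple s t) a b = Hq t (s a) (s b).
    by rewrite /Hq Xp Hperm !tt.
  rewrite /ev /= gperm; congr (_ < _ * _).
    rewrite [RHS](reindex_inj (@perm_inj _ s)); apply: eq_bigr => j _.
    by rewrite Hqp !tt.
  rewrite [RHS](reindex_inj (@perm_inj _ s)); apply: eq_bigr => j _.
  by rewrite Hqp.
pose E i := [set w | ev i ((Zt w, W w) : T')].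
have FsE s : @Fs _ _ _ _ _ U n.+1 Z W s = (fun w => ((tperm_tuple s (Zt w), W w) : T')).
  apply: funext => w; rewrite /Fs; congr (_, _).
  by apply: eq_from_tnth => k; rewrite !tnth_mktuple.
have PE i : P (E i) = P (E ord_max).
  have := @exch _ _ _ P _ _ mu _ _ _ Z W mZ mW hiid (tperm i ord_max) _ (mev ord_max).
  rewrite !FsE.
  have -> : (fun w => ((tperm_tuple 1 (Zt w), W w) : T')) @^-1` [set q | ev ord_max q] = E ord_max.
    by apply/seteqP; split => w /=; rewrite evperm perm1.
  have -> : (fun w => ((tperm_tuple (tperm i ord_max) (Zt w), W w) : T')) @^-1` [set q | ev ord_max q] = E i.
    by apply/seteqP; split => w /=; rewrite evperm tpermR.
  by [].
have mE i : measurable (E i).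
  have := @measurable_Fs _ _ _ _ _ _ _ Z W mZ mW 1 measurableT _ (mev i); rewrite setTI FsE.
  rewrite (_ : _ @^-1` _ = E i) //.
  by apply/seteqP; split => w /=; rewrite evperm perm1.
have IE i w : \1_(E i) w = (ev i ((Zt w, W w) : T'))%:R :> R.
  rewrite indicE; case: (boolP (ev i _)) => h.
    by rewrite mem_set.
  by rewrite memNset // => hw; move: h; rewrite hw.
have key : (alpha%:E <= P (E ord_max))%E.
  pose f w : \bar R := (\sum_(k < n.+1) (\1_(E k) w)%:E)%E.
  have intf : (\int[P]_(w in setT) f w = \sum_(i < n.+1) P (E i))%E.
    rewrite /f ge0_integral_sum //.
    - by apply: eq_bigr => i _; rewrite integral_indic // setIT.
    - by move=> i; apply/measurable_EFinP; exact: measurable_indic.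
  have lb : (\int[P]_(w in setT) ((n.+1%:R * alpha)%:E) <= \int[P]_(w in setT) f w)%E.
    apply: ae_ge0_le_integral => //.
    - by move=> w _; rewrite lee_fin; apply: mulr_ge0 => //; exact: ltW.
    - by move=> w _; apply: sume_ge0 => i _; rewrite lee_fin; by rewrite indicE.
    - by apply: emeasurable_fun_sum => i; apply/measurable_EFinP; exact: measurable_indic.
    - apply: filterS hae => w hw _.
      rewrite /f sumEFin lee_fin -ler_pdivlMl ?ltr0Sn //.
      rewrite (eq_bigr _ (fun i _ => IE i w)).
      by under eq_bigr do rewrite -link.
  rewrite intf integral_cst // [X in (_ * X <= _)%E](_ : _ = 1%E) ?mule1 in lb; last exact: probability_setT.
  rewrite (eq_bigr _ (fun i _ => PE i)) in lb.
  have rE : P (E ord_max) = (fine (P (E ord_max)))%:E.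
    by rewrite fineK // fin_num_measure.
  rewrite rE sumEFin sumr_const card_ord lee_fin in lb.
  rewrite rE lee_fin -(ler_pM2l (ltr0Sn _ n)) mulr_natl.
  by rewrite [X in _ <= X]mulr_natl -mulr_natl.
have tp1 t : tperm_tuple 1 t = t.
  by apply: eq_from_tnth => k; rewrite tnth_mktuple perm1.
have EmaxE : [set w | ((V (Z ord_max w))%:E <= vstar ord_max w)%E] = E ord_max.
  by apply/seteqP; split => w /=; rewrite link.
have evevh q : ev ord_max q -> evh q.
  rewrite /ev /evh; apply: le_lt_trans; apply: ler_sum => j _.
  case: (V _ < V _); rewrite ?andbT ?andbF //; case: (j != ord_max) => //.
split; first by rewrite EmaxE.
apply: (le_trans key); apply: le_measure.
- by apply: mem_set; exact: mE.
- apply: mem_set.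
  have := @measurable_Fs _ _ _ _ _ _ _ Z W mZ mW 1 measurableT _ mevh; rewrite setTI FsE.
  rewrite (_ : _ @^-1` _ = [set w | ((V (Z ord_max w))%:E <= vhat w)%E]) //.
  by apply/seteqP; split => w /=; rewrite linkh tp1.
- by move=> w /=; rewrite linkh; apply: evevh.
Qed.
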